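(* Consider the directed $(m,h)$-CCN with a $1$-node passive adversary. In each of the following cases there is a protocol satisfying decodability and secrecy that achieves secrecy rate exactly $\frac{(h-1)^2}{h}$ (hence matching the outer bound $\frac{(h-1)^2}{h}$): (i) $h=2$ and any $m\ge 3$ (rate $\tfrac12$); (ii) $m=h+1$ for any $h\ge 2$; (iii) $h=3$ and $m\in\{4,5,6\}$ (rate $\tfrac43$).
   Context: Network model: a graph with unit-capacity edges; each use of an edge carries one symbol of a finite field $\mathbb{F}$, and entropies are measured in units of $\log|\mathbb{F}|$. A single source $S$ holds a message $\mathcal{W}$ to be multicast to a set of receivers. Each node may use its own private randomness; nodes share no prior common randomness and no side channel. An $N$-round protocol: in each round every edge is used at most once. Decodability: every receiver recovers $\mathcal{W}$ with zero error. Secrecy: $H(\mathcal{W}\mid \mathcal{V}_{\mathcal{A}})=H(\mathcal{W})$, where $\mathcal{V}_{\mathcal{A}}$ is the adversary's view over the whole protocol. The secrecy rate is $H(\mathcal{W})/N$; a rate is achievable if some protocol attains it. A $1$-node passive adversary may choose any single node other than the source and the receivers and observes all values delivered to that node; secrecy must hold for every such choice. Directed $(m,h)$-CCN ($m\ge h$): nodes $S$, $S_1,\dots,S_h$, $A_1,\dots,A_m$, $B_1,\dots,B_m$, and $\binom{m}{h}$ receivers, one per $h$-subset of $\{B_1,\dots,B_m\}$. Directed edges: $S\to S_i$ ($1\le i\le h$); $S_i\to A_i$ ($1\le i\le h$); $S_i\to A_j$ for all $1\le i\le h$, $h<j\le m$; $A_j\to B_j$ ($1\le j\le m$); $B_j\to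 R$ whenever $B_j$ is in the $h$-subset of receiver $R$. *)

(* Defs.v *)
From Stdlib Require Import Reals.
From HB Require Import structures.
From mathcomp Require Import all_boot all_algebra.

Set Implicit Arguments.
Unset Strict Implicit.
Unset Printing Implicit Defensive.

Definition is_distr (T : finType) (p : T -> R) : Prop :=
  (forall x, Rle R0 (p x)) /\ \big[Rplus/R0]_(x : T) p x = R1.

Definition law (Om T : finType) (p : Om -> R) (X : Om -> T) (x : T) : R :=
  \big[Rplus/R0]_(o : Om | X o == x) p o.

Definition logb (q : nat) (x : R) : R := Rdiv (ln x) (ln (INR q)).

(* Shannon entropy H(X) in units of log q (convention 0 log 0 = 0). *)
Definition entropy (q : nat) (Om T : finType) (p : Om -> R) (X : Om -> T) : R :=
  Ropp (\big[Rplus/R0]_(x : T) Rmult (law p X x) (logb q (law p X x))).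

Definition cond_entropy (q : nat) (Om T U : finType) (p : Om -> R)
  (X : Om -> T) (Y : Om -> U) : R :=
  Rminus (entropy q p (fun o => (X o, Y o))) (entropy q p Y).

(* Protocols on a directed graph (V, adj) with unit-capacity edges.
   An outcome is a pair (w, r) of the message w and the family r of
   private randomness of all nodes; the joint law is the product of the
   message law pW and the independent node laws pR v.
   A run of an N-round protocol is described by its transcript
   X o u v t : F = symbol carried by edge u -> v in round t on outcome o. *)

Definition outcome (Msg Rnd V : finType) := (Msg * {ffun V -> Rnd})%type.

Definition oprob (Msg Rnd V : finType) (pW : Msg -> R) (pR : V -> Rnd -> R)
  (o : outcome Msg Rnd V) : R :=
  Rmult (pW o.1) (\big[Rmult/R1]_(v : V) pR v (o.2 v)).

Definition causal (V : finType) (adj : rel V) (src : V) (Msg Rnd F : Type)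
  (N : nat) (X : Msg * {ffun V -> Rnd} -> V -> V -> 'I_N -> F) : Prop :=
  forall (u v : V) (t : 'I_N) (o o' : Msg * {ffun V -> Rnd}),
    adj u v ->
    o.2 u = o'.2 u ->
    (u = src -> o.1 = o'.1) ->
    (forall (u' : V) (t' : 'I_N), adj u' u -> (t' <= t)%N ->
        X o u' u t' = X o' u' u t') ->
    X o u v t = X o' u v t.

Definition view (V : finType) (adj : rel V) (Msg Rnd F : Type) (N : nat)
  (X : Msg * {ffun V -> Rnd} -> V -> V -> 'I_N -> F) (v : V)
  (o : Msg * {ffun V -> Rnd}) : {ffun V * 'I_N -> option F} :=
  [ffun p : V * 'I_N => if adj p.1 v then Some (X o p.1 v p.2) else None].

Definition secure_rate_achievable (V : finType) (adj : rel V) (src : V)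
  (isRcv isAdv : pred V) (rate : R) : Prop :=
  exists (F : finFieldType) (N : nat) (Msg Rnd : finType)
         (pW : Msg -> R) (pR : V -> Rnd -> R)
         (X : Msg * {ffun V -> Rnd} -> V -> V -> 'I_N -> F),
    let p := oprob pW pR in
    let W := fun o : outcome Msg Rnd V => o.1 in
    (0 < N)%N /\
        is_distr pW /\ (forall v, is_distr (pR v)) /\
        causal adj src X /\
        (forall v, isRcv v ->
           exists dec : Rnd -> {ffun V * 'I_N -> option F} -> Msg,
             forall o : outcome Msg Rnd V, Rlt R0 (p o) ->
               dec (o.2 v) (view adj X v o) = o.1) /\
        (forall a, isAdv a ->
           cond_entropy #|F| p W (view adj X a) = entropy #|F| p W) /\
        Rdiv (entropy #|F| p W) (INR N) = rate.

(* Nodes (0-based indices):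
     S                    = inl (inl (inl (inl tt)))
     S_i  (i : 'I_h)      = inl (inl (inl (inr i)))
     A_j  (j : 'I_m)      = inl (inl (inr j))
     B_j  (j : 'I_m)      = inl (inr j)
     R_X  (X h-subset of {B_1..B_m}, indexed by 'I_m) = inr X            *)

Definition ccn_node (m h : nat) : finType :=
  ((((unit + 'I_h) + 'I_m) + 'I_m) + {X : {set 'I_m} | #|X| == h})%type.

Definition ccn_src (m h : nat) : ccn_node m h := inl (inl (inl (inl tt))).

Definition ccn_adj (m h : nat) : rel (ccn_node m h) := fun u v =>
  match u, v with
  | inl (inl (inl (inl _))), inl (inl (inl (inr _))) => true
  | inl (inl (inl (inr i))), inl (inl (inr j)) =>
      (h <= j)%N || (nat_of_ord j == nat_of_ord i)
  | inl (inl (inr j)), inl (inr j') => j == j'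
  | inl (inr j), inr X => j \in sval X
  | _, _ => false
  end.

Definition ccn_rcv (m h : nat) : pred (ccn_node m h) := fun v =>
  match v with inr _ => true | _ => false end.

Definition ccn_adv (m h : nat) : pred (ccn_node m h) := fun v =>
  match v with
  | inl (inl (inl (inl _))) => false
  | inr _ => false
  | _ => true
  end.

Definition ccn_secure_rate_achievable (m h : nat) (rate : R) : Prop :=
  secure_rate_achievable (@ccn_adj m h) (ccn_src m h)
    (@ccn_rcv m h) (@ccn_adv m h) rate.

(* Main.v *)
Require Import Defs.
From Stdlib Require Import Reals Lra.
From HB Require Import structures.
From mathcomp Require Import all_boot all_algebra.
From mathcomp Require Import finfield.

Set Implicit Arguments.
Unset Strict Implicit.
Unset Printing Implicit Defensive.
Import GRing.Theory.


Lemma RplusA' : associative Rplus. Proof. by move=> *; rewrite Rplus_assoc. Qed.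
Lemma RmultA' : associative Rmult. Proof. by move=> *; rewrite Rmult_assoc. Qed.
HB.instance Definition _ := Monoid.isComLaw.Build R R0 Rplus RplusA' Rplus_comm Rplus_0_l.
HB.instance Definition _ := Monoid.isComLaw.Build R R1 Rmult RmultA' Rmult_comm Rmult_1_l.
Lemma Rmul0m : left_zero R0 Rmult. Proof. by move=> x; rewrite Rmult_0_l. Qed.
Lemma Rmulm0 : right_zero R0 Rmult. Proof. by move=> x; rewrite Rmult_0_r. Qed.
HB.instance Definition _ := Monoid.isMulLaw.Build R R0 Rmult Rmul0m Rmulm0.
Lemma RmulDl : left_distributive Rmult Rplus. Proof. by move=> *; rewrite Rmult_plus_distr_r. Qed.
Lemma RmulDr : right_distributive Rmult Rplus. Proof. by move=> *; rewrite Rmult_plus_distr_l. Qed.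
HB.instance Definition _ := Monoid.isAddLaw.Build R Rmult Rplus RmulDl RmulDr.

Lemma Rsum_const (T : finType) (c : R) :
  \big[Rplus/R0]_(x : T) c = Rmult (INR #|T|) c.
Proof.
rewrite big_const; elim: #|T| => [|k IH]; first by rewrite /= Rmult_0_l.
rewrite S_INR -/(iter _ _ _) /= IH; ring.
Qed.

Lemma Rsum_distrl (T : finType) (P : pred T) (c : R) (f : T -> R) :
  \big[Rplus/R0]_(x | P x) Rmult c (f x) = Rmult c (\big[Rplus/R0]_(x | P x) f x).
Proof. by rewrite big_distrr. Qed.

Lemma Rsum_ge0 (T : finType) (P : pred T) (f : T -> R) :
  (forall x, Rle R0 (f x)) -> Rle R0 (\big[Rplus/R0]_(x | P x) f x).
Proof.
move=> H; elim/big_ind: _ => //; [exact: Rle_refl | move=> a b ? ?; lra].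
Qed.

Section Ent.
Variables (Om T U : finType) (p : Om -> R) (q : nat).

Lemma law_mkcond (Y : finType) (X : Om -> Y) y :
  law p X y = \big[Rplus/R0]_o (if X o == y then p o else R0).
Proof. by rewrite /law big_mkcond. Qed.

Lemma law_sum (Y : finType) (X : Om -> Y) :
  \big[Rplus/R0]_y law p X y = \big[Rplus/R0]_o p o.
Proof.
under eq_bigr do rewrite law_mkcond.
rewrite exchange_big /=; apply: eq_bigr => o _.
rewrite (bigD1 (X o)) //= eqxx big1 ?Rplus_0_r // => y /negPf.
by rewrite eq_sym => ->.
Qed.

Lemma law_marg2 (W : Om -> T) (V : Om -> U) v :
  law p V v = \big[Rplus/R0]_w law p (fun o => (W o, V o)) (w, v).
Proof.
rewrite law_mkcond; under [RHS]eq_bigr do rewrite law_mkcond.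
rewrite exchange_big /=; apply: eq_bigr => o _.
rewrite (bigD1 (W o)) //= xpair_eqE eqxx /= big1 ?Rplus_0_r // => w /negPf.
by rewrite xpair_eqE eq_sym => ->.
Qed.

Lemma law_marg1 (W : Om -> T) (V : Om -> U) w :
  law p W w = \big[Rplus/R0]_v law p (fun o => (W o, V o)) (w, v).
Proof.
rewrite law_mkcond; under [RHS]eq_bigr do rewrite law_mkcond.
rewrite exchange_big /=; apply: eq_bigr => o _.
rewrite (bigD1 (V o)) //= xpair_eqE eqxx andbT big1 ?Rplus_0_r // => v /negPf.
by rewrite xpair_eqE eq_sym => ->; rewrite andbF.
Qed.

Lemma law_ge0 (Y : finType) (X : Om -> Y) y :
  (forall o, Rle R0 (p o)) -> Rle R0 (law p X y).
Proof. by move=> H; apply: Rsum_ge0. Qed.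

Lemma xlogb_mul (a g : R) : Rlt R0 a -> Rle R0 g ->
  Rmult (Rmult a g) (logb q (Rmult a g)) =
  Rplus (Rmult a (Rmult g (logb q g))) (Rmult (Rmult a g) (logb q a)).
Proof.
move=> Ha Hg; case: (Rle_lt_or_eq_dec _ _ Hg) => [Hg'|<-]; last by rewrite !Rmult_0_r !Rmult_0_l; ring.
rewrite /logb ln_mult //; rewrite /Rdiv; ring.
Qed.

Lemma sum_pair (f : T * U -> R) :
  \big[Rplus/R0]_(x : T * U) f x = \big[Rplus/R0]_(w : T) \big[Rplus/R0]_(v : U) f (w, v).
Proof. by rewrite pair_big; apply: eq_bigr; case. Qed.

Lemma secrecy_entropy (W : Om -> T) (V : Om -> U) (t0 : T) :
  (forall o, Rle R0 (p o)) -> \big[Rplus/R0]_o p o = R1 ->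
  (forall w v, law p (fun o => (W o, V o)) (w, v) = law p (fun o => (W o, V o)) (t0, v)) ->
  cond_entropy q p W V = entropy q p W.
Proof.
move=> Hp0 Hp1 Hinv.
set g := fun v => law p (fun o => (W o, V o)) (t0, v).
set a := INR #|T|.
have Ha : Rlt R0 a by apply: lt_0_INR; apply/ltP; apply/card_gt0P; exists t0.
have Hg0 : forall v, Rle R0 (g v) by move=> v; apply: law_ge0.
have HV : forall v, law p V v = Rmult a (g v).
  by move=> v; rewrite (law_marg2 W) (eq_bigr (fun _ => g v)) ?Rsum_const.
have HW : forall w, law p W w = \big[Rplus/R0]_v g v.
  by move=> w; rewrite (law_marg1 W V); apply: eq_bigr => v _; rewrite Hinv.
have Hs : Rmult a (\big[Rplus/R0]_v g v) = R1.
  by rewrite -Hp1 -(law_sum V) -Rsum_distrl; apply: eq_bigr => v _; rewrite HV.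
set Sg := \big[Rplus/R0]_v g v in HW Hs.
set Sgl := \big[Rplus/R0]_v Rmult (g v) (logb q (g v)).
have E1 : entropy q p (fun o => (W o, V o)) = Ropp (Rmult a Sgl).
  rewrite /entropy sum_pair (eq_bigr (fun _ => Sgl)) ?Rsum_const //.
  by move=> w _; apply: eq_bigr => v _; rewrite Hinv.
have E2 : entropy q p V = Ropp (Rplus (Rmult a Sgl) (Rmult (Rmult a Sg) (logb q a))).
  rewrite /entropy; congr Ropp.
  under eq_bigr do rewrite HV xlogb_mul //.
  by rewrite big_split /= -!Rsum_distrl -big_distrl.
have E3 : entropy q p W = Rmult (Rmult a Sg) (logb q a).
  rewrite /entropy (eq_bigr (fun _ => Rmult Sg (logb q Sg))); last by move=> w _; rewrite HW.
  rewrite Rsum_const.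
  have -> : Sg = Rinv a.
    by rewrite -[Sg]Rmult_1_l -(Rinv_l a); [rewrite Rmult_assoc Hs Rmult_1_r | lra].
  rewrite /logb ln_Rinv //; rewrite /Rdiv -/a -Rmult_assoc !Rinv_r; [ring | lra].
rewrite /cond_entropy E1 E2 E3; ring.
Qed.
End Ent.


Lemma sum_pairG (A B : finType) (f : A * B -> R) :
  \big[Rplus/R0]_(x : A * B) f x = \big[Rplus/R0]_(a : A) \big[Rplus/R0]_(b : B) f (a, b).
Proof. by rewrite pair_big; apply: eq_bigr; case. Qed.

Section LawInv.
Variables (Msg Rnd Vn U : finType) (s : Vn) (c : R).
Variable pp : Msg * {ffun Vn -> Rnd} -> R.
Hypothesis Hc : forall o, pp o = c.

Definition upd (tau : Rnd -> Rnd) (r : {ffun Vn -> Rnd}) : {ffun Vn -> Rnd} :=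
  [ffun u => if u == s then tau (r u) else r u].

Lemma upd_inj tau : injective tau -> injective (upd tau).
Proof.
move=> Ht r1 r2 /ffunP E; apply/ffunP => u; have := E u; rewrite !ffunE.
by case: ifP => // _; apply: Ht.
Qed.

Lemma law_pair_eq (V : Msg * {ffun Vn -> Rnd} -> U) M v :
  law pp (fun o => (o.1, V o)) (M, v) =
  \big[Rplus/R0]_(r : {ffun Vn -> Rnd}) (if V (M, r) == v then c else R0).
Proof.
rewrite law_mkcond sum_pairG.
rewrite (bigD1 M) //= [X in Rplus _ X]big1 ?Rplus_0_r.
  by apply: eq_bigr => r _; rewrite xpair_eqE eqxx /= Hc.
move=> M1 /negPf HM; apply: big1 => r _; by rewrite xpair_eqE HM.
Qed.

Lemma law_inv (V : Msg * {ffun Vn -> Rnd} -> U) M M' (tau : Rnd -> Rnd) :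
  injective tau -> (forall r, V (M', upd tau r) = V (M, r)) ->
  forall v, law pp (fun o => (o.1, V o)) (M, v) = law pp (fun o => (o.1, V o)) (M', v).
Proof.
move=> Ht HV v; rewrite !law_pair_eq [RHS](reindex_inj (upd_inj Ht)).
by apply: eq_bigr => r _; rewrite HV.
Qed.
End LawInv.


Section Proto.
Variables (p n m : nat).
Local Notation K := 'F_p.
Local Notation vec := {ffun 'I_n.+1 -> 'F_p}.
Local Notation Msg := {ffun 'I_n * 'I_n -> 'F_p}.

Definition Tv (i : 'I_n.+1) (M : Msg) : vec :=
  [ffun c => match unlift ord0 i with
             | None => 0%R
             | Some a => match unlift ord0 c with
                         | Some b => M (a, b)
                         | None => (- \sum_(a' | a' != a) M (a', a))%R
                         end
             end].

Definition xv (i : 'I_n.+1) (M : Msg) (k : vec) : vec := [ffun c => (k c + Tv i M c)%R].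

Lemma xv_sec i M M' k : xv i M' (k + (Tv i M - Tv i M'))%R = xv i M k.
Proof. by apply/ffunP => c; rewrite !ffunE -addrA subrK. Qed.

Variable g : nat -> 'I_n.+1 -> vec -> K.

Definition share (j : 'I_m) (M : Msg) (k : vec) : vec :=
  if (j < n.+1)%N then xv (inord j) M k else [ffun i => g j i (xv i M k)].

Variables (F : finType) (enc : vec -> F) (decF : F -> vec).
Hypothesis encK : cancel enc decF.
Local Notation Vn := (ccn_node m n.+1).
Local Notation Om := (Msg * {ffun Vn -> vec})%type.

Definition kS (o : Om) : vec := o.2 (ccn_src m n.+1).
Definition symS (o : Om) (i : 'I_n.+1) : F := enc (xv i o.1 (kS o)).
Definition fSA (i : 'I_n.+1) (j : 'I_m) (s : F) : F :=
  enc (if (j < n.+1)%N then decF s else [ffun _ => g j i (decF s)]).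
Definition fA (j : 'I_m) (inc : 'I_n.+1 -> F) : F :=
  enc (if (j < n.+1)%N then decF (inc (inord j)) else [ffun i => decF (inc i) ord0]).
Definition symA (o : Om) (j : 'I_m) : F := fA j (fun i => fSA i j (symS o i)).

Definition Xp (o : Om) (u v : Vn) (t : 'I_1) : F :=
  match u, v with
  | inl (inl (inl (inl _))), inl (inl (inl (inr i))) => symS o i
  | inl (inl (inl (inr i))), inl (inl (inr j)) => fSA i j (symS o i)
  | inl (inl (inr j)), inl (inr _) => symA o j
  | inl (inr j), inr _ => symA o j
  | _, _ => enc 0%R
  end.

Lemma symA_share o j : symA o j = enc (share j o.1 (kS o)).
Proof.
rewrite /symA /fA /share; case: ifP => hj; first by rewrite /fSA hj /symS !encK.
congr enc; apply/ffunP => i; by rewrite !ffunE /fSA hj /symS !encK ffunE.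
Qed.

Lemma Xp_causal : causal (@ccn_adj m n.+1) (ccn_src m n.+1) Xp.
Proof.
move=> u v t o o' Hadj Hr Hsrc Hin.
case: u Hadj Hin Hr Hsrc => [[[[[]|i]|j]|j]|Xs]; case: v => [[[[[]|i']|j']|j']|Xs'] //= Hadj Hin Hr Hsrc.
- by rewrite /symS /kS Hsrc // Hr.
- by have /= -> := Hin (ccn_src m n.+1) t isT (leqnn t).
- rewrite /symA /fA; case: ifP => hj.
    have /= -> // := Hin (inl (inl (inl (inr (inord j))))) t _ (leqnn t).
    by rewrite /= inordK // eqxx orbT.
  congr enc; apply/ffunP => i; rewrite !ffunE.
  have /= -> // := Hin (inl (inl (inl (inr i)))) t _ (leqnn t).
  by rewrite /= leqNgt hj.
- by have /= -> // := Hin (inl (inl (inr j))) t _ (leqnn t); rewrite /= eqxx.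
Qed.
Lemma symA_in (o o' : Om) (j : 'I_m) :
  (forall i : 'I_n.+1, ((n.+1 <= j) || (nat_of_ord j == nat_of_ord i))%N ->
     fSA i j (symS o i) = fSA i j (symS o' i)) ->
  symA o j = symA o' j.
Proof.
move=> H; rewrite /symA /fA; case: ifP => hj.
  by rewrite H // inordK // eqxx orbT.
congr enc; apply/ffunP => i; rewrite !ffunE H //.
by rewrite leqNgt hj.
Qed.

Definition srcN := ccn_src m n.+1.

Lemma kS_upd tau M r : kS (M, upd srcN tau r) = tau (r srcN).
Proof. by rewrite /kS ffunE eqxx. Qed.

Hypothesis HA : forall j : 'I_m, (n.+1 <= j)%N -> forall M M' : Msg,
  exists tau : vec -> vec, injective tau /\
    forall k i, g j i (xv i M' (tau k)) = g j i (xv i M k).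

Lemma jsec (j : 'I_m) (M M' : Msg) : exists tau : vec -> vec, injective tau /\
  forall r i, ((n.+1 <= j) || (nat_of_ord j == nat_of_ord i))%N ->
     fSA i j (symS (M', upd srcN tau r) i) = fSA i j (symS (M, r) i).
Proof.
case: (ltnP j n.+1) => hj.
  exists (fun k => k + (Tv (inord j) M - Tv (inord j) M'))%R; split; first exact: addIr.
  move=> r i /= /eqP ji.
  have -> : i = inord j by apply: val_inj; rewrite /= inordK.
  by rewrite /symS kS_upd xv_sec.
have [tau [Ht H]] := HA hj M M'.
exists tau; split => // r i _.
rewrite /fSA ltnNge hj /= /symS !encK kS_upd; congr enc; apply/ffunP => c.
by rewrite !ffunE H.
Qed.

Lemma adv_inv (a : Vn) : ccn_adv a -> forall M M' : Msg,
  exists tau : vec -> vec, injective tau /\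
  forall r, view (@ccn_adj m n.+1) Xp a (M', upd srcN tau r) = view (@ccn_adj m n.+1) Xp a (M, r).
Proof.
case: a => [[[[[]|i]|j]|j]|Xs] //= _ M M'.
- exists (fun k => k + (Tv i M - Tv i M'))%R; split; first exact: addIr.
  move=> r; apply/ffunP => -[u t]; rewrite !ffunE.
  case: u => [[[[[]|i']|j']|j']|Xs'] //=.
  by rewrite /symS kS_upd xv_sec.
- have [tau [Ht H]] := jsec j M M'; exists tau; split => // r.
  apply/ffunP => -[u t]; rewrite !ffunE.
  case: u => [[[[[]|i']|j']|j']|Xs'] //=.
  by case: ifP => // hadj; rewrite H.
- have [tau [Ht H]] := jsec j M M'; exists tau; split => // r.
  apply/ffunP => -[u t]; rewrite !ffunE.
  case: u => [[[[[]|i']|j']|j']|Xs'] //=.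
  case: eqP => // ->; congr Some; apply: symA_in => i hi; exact: H.
Qed.

Hypothesis HD : forall X : {set 'I_m}, #|X| = n.+1 ->
  exists D : {ffun 'I_m -> vec} -> Msg,
    forall M k, D [ffun j => if j \in X then share j M k else 0%R] = M.

Lemma rcv_dec (v : Vn) : ccn_rcv v ->
  exists dec : vec -> {ffun Vn * 'I_1 -> option F} -> Msg,
    forall o : Om, dec (o.2 v) (view (@ccn_adj m n.+1) Xp v o) = o.1.
Proof.
case: v => [[[[[]|i]|j]|j]|Xs] //= _.
have [D HDX] := HD (eqP (svalP Xs)).
exists (fun _ vw => D [ffun j => if j \in sval Xs then
          (if vw (inl (inr j), ord0) is Some s then decF s else 0%R) else 0%R]).
move=> o; rewrite -[RHS](HDX o.1 (kS o)); congr D; apply/ffunP => j; rewrite !ffunE /=.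
by case: ifP => // ->; rewrite symA_share encK.
Qed.
End Proto.


Lemma INR_muln a b : INR (a * b) = Rmult (INR a) (INR b).
Proof. exact: mult_INR. Qed.

Lemma INR_expn a k : INR (a ^ k) = pow (INR a) k.
Proof. elim: k => [|k IH] //; by rewrite expnS INR_muln IH. Qed.

Lemma Rprod_const (T : finType) (c : R) : \big[Rmult/R1]_(x : T) c = pow c #|T|.
Proof. rewrite big_const; elim: #|T| => [|k IH] //=; by rewrite IH. Qed.

Lemma INR_pos_card (T : finType) (x : T) : Rlt R0 (INR #|T|).
Proof. by apply: lt_0_INR; apply/ltP; apply/card_gt0P; exists x. Qed.

Lemma uniform_distr (T : finType) (x : T) : is_distr (fun _ : T => Rinv (INR #|T|)).
Proof.
have H := INR_pos_card x; split.
  by move=> _; apply: Rlt_le; apply: Rinv_0_lt_compat.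
by rewrite Rsum_const Rinv_r //; lra.
Qed.

Local Notation vecN p n := {ffun 'I_n.+1 -> 'F_p} (only parsing).
Local Notation MsgN p n := {ffun 'I_n * 'I_n -> 'F_p} (only parsing).

Theorem generic (p n m : nat) (pr : prime p)
  (g : nat -> 'I_n.+1 -> {ffun 'I_n.+1 -> 'F_p} -> 'F_p)
  (HA : forall j : 'I_m, (n.+1 <= j)%N -> forall M M' : {ffun 'I_n * 'I_n -> 'F_p},
    exists tau : {ffun 'I_n.+1 -> 'F_p} -> {ffun 'I_n.+1 -> 'F_p}, injective tau /\
      forall k i, g j i (xv i M' (tau k)) = g j i (xv i M k))
  (HD : forall X : {set 'I_m}, #|X| = n.+1 ->
    exists D : {ffun 'I_m -> {ffun 'I_n.+1 -> 'F_p}} -> {ffun 'I_n * 'I_n -> 'F_p},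
      forall M k, D [ffun j => if j \in X then share g j M k else 0%R] = M) :
  ccn_secure_rate_achievable m n.+1 (Rdiv (INR (n ^ 2)) (INR n.+1)).
Proof.
have [F _ cardF] := pPrimePowerField pr (ltn0Sn n).
have E : #|(vecN p n)| = #|F| by rewrite card_ffun card_Fp // card_ord cardF.
pose enc (v : (vecN p n)) : F := enum_val (cast_ord E (enum_rank v)).
pose decF (f : F) : (vecN p n) := enum_val (cast_ord (esym E) (enum_rank f)).
have encK : cancel enc decF by move=> v; rewrite /enc /decF enum_valK cast_ordK enum_rankK.
set Vn := ccn_node m n.+1.
pose pW := fun _ : (MsgN p n) => Rinv (INR #|(MsgN p n)|).
pose pR := fun (_ : Vn) (_ : (vecN p n)) => Rinv (INR #|(vecN p n)|).
exists F, 1%N, (MsgN p n), (vecN p n), pW, pR, (Xp g enc decF).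
set c := Rmult (Rinv (INR #|(MsgN p n)|)) (\big[Rmult/R1]_(v : Vn) Rinv (INR #|(vecN p n)|)).
have Hc : forall o, oprob pW pR o = c by [].
have Hm0 := INR_pos_card (0%R : (MsgN p n)).
have Hv0 := INR_pos_card (0%R : (vecN p n)).
have Hsum : \big[Rplus/R0]_(o : outcome (MsgN p n) (vecN p n) Vn) oprob pW pR o = R1.
  rewrite (eq_bigr (fun _ => c)) // Rsum_const /c Rprod_const /outcome card_prod.
  have -> : #|{ffun Vn -> (vecN p n)}| = (#|(vecN p n)| ^ #|Vn|)%N by rewrite card_ffun.
  rewrite INR_muln INR_expn pow_inv.
  have := pow_lt _ #|Vn| Hv0; move: (pow (INR #|(vecN p n)|) #|Vn|) => z Hz.
  move: Hm0; move: (INR #|(MsgN p n)|) => y Hy.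
  field; lra.
have Hp0 : forall o, Rle R0 (oprob pW pR o).
  move=> o; rewrite Hc /c Rprod_const; apply: Rmult_le_pos.
    by apply: Rlt_le; apply: Rinv_0_lt_compat.
  by apply: pow_le; apply: Rlt_le; apply: Rinv_0_lt_compat.
split => //; split; first exact: uniform_distr (0%R : (MsgN p n)).
split; first by move=> v; exact: uniform_distr (0%R : (vecN p n)).
split; first exact: Xp_causal.
split.
  move=> v Hv; have [dec Hdec] := rcv_dec encK HD Hv.
  by exists dec => o _; apply: Hdec.
split.
  move=> a Ha. refine (@secrecy_entropy _ _ _ _ _ _ _ (0%R : MsgN p n) Hp0 Hsum _) => w v.
  have [tau [Ht Htau]] := adv_inv encK HA Ha w 0%R.
  exact: (law_inv Hc Ht Htau v).
have HL : forall M : MsgN p n, law (oprob pW pR) [eta fst] M = Rinv (INR #|MsgN p n|).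
  move=> M.
  have -> : law (oprob pW pR) [eta fst] M = law (oprob pW pR) (fun o => (o.1, tt)) (M, tt).
    by apply: eq_bigl => o; rewrite /= xpair_eqE andbT.
  rewrite (law_pair_eq Hc (fun _ => tt)) (eq_bigr (fun _ => c)) // Rsum_const.
  move: Hsum; rewrite (eq_bigr (fun _ => c)) // Rsum_const /outcome card_prod INR_muln.
  move: Hm0; move: (INR #|MsgN p n|) => y Hy H.
  apply: (Rmult_eq_reg_l y); last lra.
  by rewrite -Rmult_assoc H Rinv_r //; lra.
rewrite /entropy (eq_bigr (fun _ => Rmult (Rinv (INR #|MsgN p n|)) (logb #|F| (Rinv (INR #|MsgN p n|))))); last by move=> M _; rewrite HL.
rewrite Rsum_const /logb ln_Rinv // cardF.
have -> : #|MsgN p n| = (p ^ (n * n))%N by rewrite card_ffun card_Fp // card_prod card_ord.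
rewrite !INR_expn !ln_pow; last first.
- by apply: lt_0_INR; apply/ltP; apply: prime_gt0.
- by apply: lt_0_INR; apply/ltP; apply: prime_gt0.
have Hp1 : Rlt R1 (INR p) by apply: (lt_1_INR); apply/ltP; apply: prime_gt1.
have Hlp : Rlt R0 (ln (INR p)) by have := ln_increasing R1 (INR p) Rlt_0_1 Hp1; rewrite ln_1.
have Hn : Rlt R0 (INR n.+1) by apply: lt_0_INR; apply/ltP.
have Hpp : Rlt R0 (pow (INR p) (n * n)) by apply: pow_lt; lra.
move: Hpp; move: (pow (INR p) (n * n)) => z Hz.
change (INR 1) with R1; rewrite INR_muln /Rdiv; field; repeat split; lra.
Qed.

From mathcomp Require Import ring zify.

Open Scope ring_scope.

Section TvLemmas.
Variables (p n : nat).
Local Notation vec := {ffun 'I_n.+1 -> 'F_p}.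
Local Notation Msg := {ffun 'I_n * 'I_n -> 'F_p}.

Lemma xv0 (M : Msg) (k : vec) c : xv ord0 M k c = k c.
Proof. by rewrite !ffunE unlift_none addr0. Qed.

Lemma xvLL (M : Msg) (k : vec) a b : xv (lift ord0 a) M k (lift ord0 b) = k (lift ord0 b) + M (a, b).
Proof. by rewrite !ffunE !liftK. Qed.

Lemma xvL0 (M : Msg) (k : vec) a :
  xv (lift ord0 a) M k ord0 = k ord0 - \sum_(a' | a' != a) M (a', a).
Proof. by rewrite !ffunE liftK unlift_none. Qed.

Lemma xv_diag (M : Msg) (k : vec) a : xv (lift ord0 a) M k (lift ord0 a) = k (lift ord0 a) + M (a, a).
Proof. exact: xvLL. Qed.
End TvLemmas.

Section SchemeB.
Variables (p n : nat).
Local Notation vec := {ffun 'I_n.+1 -> 'F_p}.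
Local Notation Msg := {ffun 'I_n * 'I_n -> 'F_p}.
Local Notation l0 := (lift ord0).

Definition decAll (xs : 'I_n.+1 -> vec) : Msg :=
  [ffun ab => xs (l0 ab.1) (l0 ab.2) - xs ord0 (l0 ab.2)].

Lemma decAll_ok (xs : 'I_n.+1 -> vec) M k : (forall i, xs i = xv i M k) -> decAll xs = M.
Proof.
move=> H; apply/ffunP => -[a b]; rewrite ffunE /= !H xvLL xv0.
by rewrite addrC addKr.
Qed.

Definition dec0 (xs : 'I_n.+1 -> vec) (y : vec) : Msg :=
  [ffun ab => (xs (l0 ab.1) (l0 ab.2) - xs (l0 ab.2) (l0 ab.2)) +
    ((y ord0 - xs (l0 ab.2) ord0) -
      \sum_(a | a != ab.2) (xs (l0 a) (l0 ab.2) - xs (l0 ab.2) (l0 ab.2))) / (n.-1)%:R].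

Lemma dec0_ok (xs : 'I_n.+1 -> vec) y M k : (n.-1)%:R != 0 :> 'F_p ->
  (forall a, xs (l0 a) = xv (l0 a) M k) -> y = [ffun i => xv i M k i] ->
  dec0 xs y = M.
Proof.
move=> Hn H Hy; apply/ffunP => -[a b]; rewrite ffunE /= !H Hy (ffunE (fun i => xv i M k i)) xv0 xvL0 !xvLL.
under eq_bigr => a' _ do rewrite H !xvLL.
have E1 : forall a', (k (l0 b) + M (a', b) - (k (l0 b) + M (b, b))) = M (a', b) - M (b, b).
  by move=> a'; ring.
under eq_bigr => a' _ do rewrite E1.
have Hc : forall c : 'F_p, \sum_(a : 'I_n | a != b) c = c * (n.-1)%:R.
  move=> c; rewrite (eq_bigl (fun a => a \in predC1 b)) ?sumr_const ?cardC1 ?card_ord ?mulr_natr // => x.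
rewrite sumrB Hc.
set S := \sum_(i | i != b) M (i, b).
rewrite E1.
have -> : k ord0 - (k ord0 - S) - (S - M (b, b) * (n.-1)%:R) = M (b, b) * (n.-1)%:R by ring.
by rewrite mulfK // addrNK.
Qed.

Definition deci (i : 'I_n) (xs : 'I_n.+1 -> vec) (y : vec) : Msg :=
  [ffun ab => if ab.1 != i then xs (l0 ab.1) (l0 ab.2) - xs ord0 (l0 ab.2)
    else if ab.2 == i then y (l0 i) - xs ord0 (l0 i)
    else (xs ord0 ord0 - xs (l0 ab.2) ord0) -
      \sum_(a | (a != ab.2) && (a != i)) (xs (l0 a) (l0 ab.2) - xs ord0 (l0 ab.2))].

Lemma deci_ok (i : 'I_n) (xs : 'I_n.+1 -> vec) y M k :
  xs ord0 = xv ord0 M k -> (forall a, a != i -> xs (l0 a) = xv (l0 a) M k) ->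
  y = [ffun i => xv i M k i] -> deci i xs y = M.
Proof.
move=> H0 H Hy; apply/ffunP => -[a b]; rewrite ffunE /=.
case: ifP => hai.
  by rewrite H // H0 xvLL xv0 addrC addKr.
move/negbFE/eqP: hai => ?; subst i.
case: ifP => [/eqP ->|/negbT hba].
  by rewrite Hy (ffunE (fun i => xv i M k i)) H0 xv0 xvLL addrC addKr.
rewrite H0 (H b hba) xv0 xvL0.
under eq_bigr => a' /andP [_ ha'] do rewrite H // xvLL xv0 addrAC subrr add0r.
rewrite (bigD1 a) //=; last by rewrite eq_sym hba.
by set S := \sum_(i < n | _) _; ring.
Qed.
End SchemeB.

Close Scope ring_scope.


Lemma Fp_nat_neq0 p j : prime p -> (0 < j < p)%N -> (j%:R : 'F_p)%R != 0%R.
Proof.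
move=> pr /andP [j0 jp]; apply/eqP => H.
have := val_Fp_nat pr j; rewrite H modn_small //= => E.
by move: j0; rewrite -E.
Qed.

Lemma setC1_in (T : finType) (X : {set T}) e : ~: X = [set e] -> forall j, (j \in X) = (j != e).
Proof. by move=> HX j; rewrite -[j \in X]negbK -in_setC HX in_set1. Qed.

Lemma share_lo p n m (g : nat -> 'I_n.+1 -> {ffun 'I_n.+1 -> 'F_p} -> 'F_p) (j : 'I_m) (i : 'I_n.+1)
  (M : {ffun 'I_n * 'I_n -> 'F_p}) (k : {ffun 'I_n.+1 -> 'F_p}) : nat_of_ord j = nat_of_ord i ->
  share g j M k = xv i M k.
Proof.
move=> E; rewrite /share E ltn_ord; congr xv; apply: val_inj; by rewrite /= inordK.
Qed.

Lemma share_hi p n m (g : nat -> 'I_n.+1 -> {ffun 'I_n.+1 -> 'F_p} -> 'F_p) (j : 'I_m)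
  (M : {ffun 'I_n * 'I_n -> 'F_p}) (k : {ffun 'I_n.+1 -> 'F_p}) : (n.+1 <= j)%N ->
  share g j M k = [ffun i => g (nat_of_ord j) i (xv i M k)].
Proof. by move=> hj; rewrite /share ltnNge hj. Qed.

Lemma share_hiE p n m (g : nat -> 'I_n.+1 -> {ffun 'I_n.+1 -> 'F_p} -> 'F_p) (j : 'I_m)
  (M : {ffun 'I_n * 'I_n -> 'F_p}) (k : {ffun 'I_n.+1 -> 'F_p}) i : (n.+1 <= j)%N ->
  share g j M k i = g (nat_of_ord j) i (xv i M k).
Proof. by move=> hj; rewrite share_hi // ffunE. Qed.

Theorem schemeB p n (pr : prime p) (hn : (1 < n)%N) (hp : (n < p)%N) :
  ccn_secure_rate_achievable n.+2 n.+1 (Rdiv (INR (n ^ 2)) (INR n.+1)).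
Proof.
apply: (generic pr (g := fun _ i x => x i)).
  move=> j hj M M'.
  exists (fun k => k + [ffun i => Tv i M i - Tv i M' i])%R; split; first exact: addIr.
  by move=> k i; rewrite !ffunE -addrA subrK.
move=> X cX.
have c1 : #|~: X| == 1%N.
  by move: (cardsC X); rewrite cX card_ord => H; apply/eqP; lia.
have [e He] := cards1P c1; have HX := setC1_in He.
have Hlo : forall (i : 'I_n.+1) (M : {ffun 'I_n * 'I_n -> 'F_p}) (k : {ffun 'I_n.+1 -> 'F_p}), lift ord_max i != e ->
    [ffun j => if j \in X then share (fun _ i0 x => x i0) j M k else 0%R] (lift ord_max i) = xv i M k.
  move=> i M k hi; rewrite ffunE HX hi; apply: share_lo; by rewrite /= /bump leqNgt ltn_ord.
have Hhi : forall (M : {ffun 'I_n * 'I_n -> 'F_p}) (k : {ffun 'I_n.+1 -> 'F_p}), ord_max != e ->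
    [ffun j => if j \in X then share (fun _ i0 x => x i0) j M k else 0%R] ord_max = [ffun i => xv i M k i].
  by move=> M k hi; rewrite ffunE HX hi share_hi.
case: (unliftP ord_max e) => [e'|] De.
  case: (unliftP ord0 e') => [i|] De'.
  - exists (fun s => deci i (fun i0 => s (lift ord_max i0)) (s ord_max)) => M k.
    apply: deci_ok.
    + by apply: Hlo; rewrite De De' (inj_eq lift_inj) neq_lift.
    + by move=> a ha; apply: Hlo; rewrite De De' !(inj_eq lift_inj).
    + by apply: Hhi; rewrite De neq_lift.
  - exists (fun s => dec0 (fun i0 => s (lift ord_max i0)) (s ord_max)) => M k.
    apply: dec0_ok.
    + apply: Fp_nat_neq0 => //; apply/andP; split; first by rewrite -ltnS prednK // ltnW.
      by apply: leq_ltn_trans hp; apply: leq_pred.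
    + by move=> a; apply: Hlo; rewrite De De' (inj_eq lift_inj) eq_sym neq_lift.
    + by apply: Hhi; rewrite De neq_lift.
exists (fun s => decAll (fun i0 => s (lift ord_max i0))) => M k.
by apply: decAll_ok => i; apply: Hlo; rewrite De eq_sym neq_lift.
Qed.

Open Scope ring_scope.

Section SchemeA.
Variable p : nat.
Hypothesis pr : prime p.
Local Notation vec := {ffun 'I_2 -> 'F_p}.
Local Notation Msg := {ffun 'I_1 * 'I_1 -> 'F_p}.
Local Notation i1 := (lift ord0 (ord0 : 'I_1)).

Definition gA (j : nat) (i : 'I_2) (x : vec) : 'F_p :=
  if i == ord0 then x i1 + j%:R * x ord0 else x i1.

Lemma xvA0 (M : Msg) (k : vec) : xv i1 M k ord0 = k ord0.
Proof.
rewrite xvL0 big_pred0 ?oppr0 ?addr0 // => a; by rewrite (ord1 a) eqxx.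
Qed.

Lemma xvA1 (M : Msg) (k : vec) : xv i1 M k i1 = k i1 + M (ord0, ord0).
Proof. exact: xvLL. Qed.

Lemma I2_cases (i : 'I_2) : i = ord0 \/ i = i1.
Proof. case: (unliftP ord0 i) => [i'|] ->; [right; by rewrite (ord1 i') | by left]. Qed.

Lemma Fp_neq0 j : (0 < j < p)%N -> (j%:R : 'F_p) != 0.
Proof. exact: Fp_nat_neq0. Qed.

Lemma schemeA_HA m : forall j : 'I_m, (j < p)%N -> (1 < j)%N -> forall M M' : Msg,
    exists tau : vec -> vec, injective tau /\
      forall k i, gA j i (xv i M' (tau k)) = gA j i (xv i M k).
Proof.
move=> j jp j1 M M'.
have jn0 : (j%:R : 'F_p) != 0 by apply: Fp_neq0; rewrite jp andbT; lia.
exists (fun k => k + [ffun c => if c == ord0 then (M' (ord0, ord0) - M (ord0, ord0)) / j%:R else M (ord0, ord0) - M' (ord0, ord0)]); split; first exact: addIr.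
move=> k i; case: (I2_cases i) => ->; rewrite /gA /=.
  by rewrite !xv0 !ffunE /=; field.
by rewrite !xvA1 !ffunE /=; ring.
Qed.

Definition dec2 (a b : nat) (sa sb : vec) : 'F_p :=
  if a == 0%N then sb i1 - sa i1
  else if a == 1%N then sb i1 - sb ord0 + b%:R * sa ord0
  else sa i1 - (sa ord0 - a%:R * ((sa ord0 - sb ord0) / (a%:R - b%:R))).

Lemma dec2_ok m (a b : 'I_m) (M : Msg) k : (m <= p)%N -> (a < b)%N ->
  dec2 a b (share gA a M k) (share gA b M k) = M (ord0, ord0).
Proof.
move=> mp ab.
have bp : (b < p)%N by apply: leq_trans mp.
case: a ab => [[|[|a]] Ha] /= ab.
- rewrite (@share_lo p 1 m gA _ ord0) //.
  case: b ab bp => [[|[|b]] Hb] //= ab bp.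
    by rewrite (@share_lo p 1 m gA _ i1) // /dec2 /= xv0 xvA1; ring.
  by rewrite /dec2 /= !share_hiE // /gA /= ?xv0 ?xvA0 ?xvA1; ring.
- rewrite (@share_lo p 1 m gA _ i1) //.
  case: b ab bp => [[|[|b]] Hb] //= ab bp.
  by rewrite /dec2 /= !share_hiE // /gA /= ?xv0 ?xvA0 ?xvA1; ring.
- case: b ab bp => [[|[|b]] Hb] //= ab bp.
  rewrite /dec2 /= !share_hiE // /gA /= !xv0.
  have H : (a.+2%:R - b.+2%:R : 'F_p) != 0.
    rewrite -opprB -natrB ?oppr_eq0; last by lia.
    by apply: Fp_neq0; lia.
  rewrite xvA1; move: (a.+2%:R : 'F_p) (b.+2%:R : 'F_p) H => x y H; by field.
Qed.
End SchemeA.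

Theorem schemeA p m (pr : prime p) (hm : (2 < m)%N) (hp : (m < p)%N) :
  ccn_secure_rate_achievable m 2 (Rdiv (INR (1 ^ 2)) (INR 2)).
Proof.
apply: (@generic p 1 m pr (@gA p)).
  move=> j hj; apply: schemeA_HA => //; exact: ltn_trans (ltn_ord j) hp.
move=> X /eqP /cards2P [a [b [ab HX]]].
wlog lab : a b ab HX / (a < b)%N.
  move=> W; case: (ltngtP a b) => h; first exact: W h.
    by apply: (W b a); rewrite 1?eq_sym // HX setUC.
  by move: ab; rewrite -(inj_eq val_inj) /= h eqxx.
exists (fun s => [ffun _ => dec2 a b (s a) (s b)]) => M k.
apply/ffunP => -[x y]; rewrite (ord1 x) (ord1 y) !ffunE HX !inE !eqxx /= orbT.
by apply: dec2_ok => //; apply: ltnW.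
Qed.

Close Scope ring_scope.

Open Scope ring_scope.

Section SchemeC.
Variable p : nat.
Hypothesis pr : prime p.
Hypothesis p5 : (5 < p)%N.
Local Notation vec := {ffun 'I_3 -> 'F_p}.
Local Notation Msg := {ffun 'I_2 * 'I_2 -> 'F_p}.
Definition o1 : 'I_2 := lift ord0 (ord0 : 'I_1).
Local Notation o0 := (ord0 : 'I_2).
Definition c0 : 'I_3 := ord0.
Definition c1 : 'I_3 := lift ord0 o0.
Definition c2 : 'I_3 := lift ord0 o1.

Lemma ffun_addE (f g : vec) x : (f + g) x = f x + g x.
Proof. by rewrite ffunE. Qed.

Lemma sum_ne0 (f : 'I_2 -> 'F_p) : \sum_(a | a != o0) f a = f o1.
Proof.
rewrite (bigD1 o1) //= big_pred0 ?addr0 // => x.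
by case: (I2_cases x) => ->.
Qed.

Lemma sum_ne1 (f : 'I_2 -> 'F_p) : \sum_(a | a != o1) f a = f o0.
Proof.
rewrite (bigD1 o0) //= big_pred0 ?addr0 // => x.
by case: (I2_cases x) => ->.
Qed.

Section Tab.
Variables (M : Msg) (k : vec).
Lemma x00 c : xv c0 M k c = k c. Proof. exact: xv0. Qed.
Lemma x10 : xv c1 M k c0 = k c0 - M (o1, o0). Proof. by rewrite /c1 /c0 xvL0 sum_ne0. Qed.
Lemma x11 : xv c1 M k c1 = k c1 + M (o0, o0). Proof. exact: xvLL. Qed.
Lemma x12 : xv c1 M k c2 = k c2 + M (o0, o1). Proof. exact: xvLL. Qed.
Lemma x20 : xv c2 M k c0 = k c0 - M (o0, o1). Proof. by rewrite /c2 /c0 xvL0 sum_ne1. Qed.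
Lemma x21 : xv c2 M k c1 = k c1 + M (o1, o0). Proof. exact: xvLL. Qed.
Lemma x22 : xv c2 M k c2 = k c2 + M (o1, o1). Proof. exact: xvLL. Qed.
End Tab.

Definition gC (j : nat) (i : 'I_3) (x : vec) : 'F_p :=
  if j == 3%N then x i
  else if j == 4%N then (if i == c0 then x c1 + x c2 else if i == c1 then x c0 + x c1 else x c0 + x c2)
  else (if i == c0 then x c1 else if i == c1 then x c0 - x c1 + x c2 else x c0 - x c2).

Definition shareN (j : nat) (M : Msg) (k : vec) : vec :=
  if (j < 3)%N then xv (inord j) M k else [ffun i => gC j i (xv i M k)].

Lemma shareN_share m (j : 'I_m) M k : share gC j M k = shareN j M k.
Proof. by []. Qed.

Lemma inord0 : inord 0 = c0. Proof. by apply: val_inj; rewrite /= inordK. Qed.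
Lemma inord1 : inord 1 = c1. Proof. by apply: val_inj; rewrite /= inordK. Qed.
Lemma inord2 : inord 2 = c2. Proof. by apply: val_inj; rewrite /= inordK. Qed.

Lemma sh0 M k : shareN 0 M k = xv c0 M k. Proof. by rewrite /shareN /= inord0. Qed.
Lemma sh1 M k : shareN 1 M k = xv c1 M k. Proof. by rewrite /shareN /= inord1. Qed.
Lemma sh2 M k : shareN 2 M k = xv c2 M k. Proof. by rewrite /shareN /= inord2. Qed.
Lemma shh j M k i : (3 <= j)%N -> shareN j M k i = gC j i (xv i M k).
Proof. by move=> hj; rewrite leqNgt in hj; rewrite /shareN (negbTE hj) ffunE. Qed.

Lemma I3_cases (i : 'I_3) : [\/ i = c0, i = c1 | i = c2].
Proof.
case: (unliftP ord0 i) => [i'|] ->; last by constructor 1.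
by case: (I2_cases i') => ->; [constructor 2 | constructor 3].
Qed.

Lemma n2 : (2%:R : 'F_p) != 0. Proof. apply: Fp_nat_neq0 => //; lia. Qed.
Lemma n3 : (3%:R : 'F_p) != 0. Proof. apply: Fp_nat_neq0 => //; lia. Qed.
Lemma n4 : (4%:R : 'F_p) != 0. Proof. apply: Fp_nat_neq0 => //; lia. Qed.

Definition decCe (a b c r s : nat) (sa sb sc : vec) : 'F_p :=
  match a, b, c, r, s with
  | 0, 1, 2, 0, 0 => 0 - 1%:R * sa c1 + 1%:R * sb c1
  | 0, 1, 2, 0, 1 => 1%:R * sa c0 - 1%:R * sc c0
  | 0, 1, 2, 1, 0 => 1%:R * sa c0 - 1%:R * sb c0
  | 0, 1, 2, 1, 1 => 0 - 1%:R * sa c2 + 1%:R * sc c2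
  | 0, 1, 3, 0, 0 => 0 - 1%:R * sa c1 + 1%:R * sb c1
  | 0, 1, 3, 0, 1 => 0 - 1%:R * sa c2 + 1%:R * sb c2
  | 0, 1, 3, 1, 0 => 1%:R * sa c0 - 1%:R * sb c0
  | 0, 1, 3, 1, 1 => 0 - 1%:R * sa c2 + 1%:R * sc c2
  | 0, 1, 4, 0, 0 => 0 - 1%:R * sa c1 + 1%:R * sb c1
  | 0, 1, 4, 0, 1 => 0 - 1%:R * sa c2 + 1%:R * sb c2
  | 0, 1, 4, 1, 0 => 1%:R * sa c0 - 1%:R * sb c0
  | 0, 1, 4, 1, 1 => 0 - 1%:R * sa c0 - 2%:R * sa c2 + 1%:R * sb c2 + 1%:R * sc c2
  | 0, 1, 5, 0, 0 => 0 - 1%:R * sa c1 + 1%:R * sb c1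
  | 0, 1, 5, 0, 1 => 0 - 1%:R * sa c2 + 1%:R * sb c2
  | 0, 1, 5, 1, 0 => 1%:R * sa c0 - 1%:R * sb c0
  | 0, 1, 5, 1, 1 => 1%:R * sa c0 - 1%:R * sb c2 - 1%:R * sc c2
  | 0, 2, 3, 0, 0 => 0 - 1%:R * sa c1 + 1%:R * sc c1
  | 0, 2, 3, 0, 1 => 1%:R * sa c0 - 1%:R * sb c0
  | 0, 2, 3, 1, 0 => 0 - 1%:R * sa c1 + 1%:R * sb c1
  | 0, 2, 3, 1, 1 => 0 - 1%:R * sa c2 + 1%:R * sb c2
  | 0, 2, 4, 0, 0 => 0 - 1%:R * sa c0 - 2%:R * sa c1 + 1%:R * sb c1 + 1%:R * sc c1
  | 0, 2, 4, 0, 1 => 1%:R * sa c0 - 1%:R * sb c0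
  | 0, 2, 4, 1, 0 => 0 - 1%:R * sa c1 + 1%:R * sb c1
  | 0, 2, 4, 1, 1 => 0 - 1%:R * sa c2 + 1%:R * sb c2
  | 0, 2, 5, 0, 0 => 2%:R * sa c0 + 1%:R * sa c2 - 1%:R * sb c0 - 1%:R * sb c1 - 1%:R * sc c1
  | 0, 2, 5, 0, 1 => 1%:R * sa c0 - 1%:R * sb c0
  | 0, 2, 5, 1, 0 => 0 - 1%:R * sa c1 + 1%:R * sb c1
  | 0, 2, 5, 1, 1 => 0 - 1%:R * sa c2 + 1%:R * sb c2
  | 0, 3, 4, 0, 0 => 0 - 1%:R * sa c1 + 1%:R * sb c1
  | 0, 3, 4, 0, 1 => 1%:R * sa c0 + 1%:R * sb c2 - 1%:R * sc c2
  | 0, 3, 4, 1, 0 => 1%:R * sa c0 + 1%:R * sb c1 - 1%:R * sc c1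
  | 0, 3, 4, 1, 1 => 0 - 1%:R * sa c2 + 1%:R * sb c2
  | 0, 3, 5, 0, 0 => 0 - 1%:R * sa c1 + 1%:R * sb c1
  | 0, 3, 5, 0, 1 => 1%:R * sa c0 - 1%:R * sb c2 - 1%:R * sc c2
  | 0, 3, 5, 1, 0 => 2%:R * sa c0 + 1%:R * sa c2 - 1%:R * sb c1 - 1%:R * sb c2 - 1%:R * sc c1 - 1%:R * sc c2
  | 0, 3, 5, 1, 1 => 0 - 1%:R * sa c2 + 1%:R * sb c2
  | 0, 4, 5, 0, 0 => (1%:R / 2%:R) * sa c0 - 1%:R * sa c1 + (1%:R / 2%:R) * sa c2 + (1%:R / 2%:R) * sb c1 - (1%:R / 4%:R) * sb c2 - (1%:R / 2%:R) * sc c1 - (1%:R / 4%:R) * sc c2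
  | 0, 4, 5, 0, 1 => 1%:R * sa c0 - (1%:R / 2%:R) * sb c2 - (1%:R / 2%:R) * sc c2
  | 0, 4, 5, 1, 0 => (3%:R / 2%:R) * sa c0 + (1%:R / 2%:R) * sa c2 - (1%:R / 2%:R) * sb c1 - (1%:R / 4%:R) * sb c2 - (1%:R / 2%:R) * sc c1 - (1%:R / 4%:R) * sc c2
  | 0, 4, 5, 1, 1 => 0 - 1%:R * sa c2 + (1%:R / 2%:R) * sb c2 - (1%:R / 2%:R) * sc c2
  | 1, 2, 3, 0, 0 => 0 - 1%:R * sa c0 + 1%:R * sa c1 - 1%:R * sb c1 + 1%:R * sc c0
  | 1, 2, 3, 0, 1 => 0 - 1%:R * sb c0 + 1%:R * sc c0
  | 1, 2, 3, 1, 0 => 0 - 1%:R * sa c0 + 1%:R * sc c0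
  | 1, 2, 3, 1, 1 => 0 - 1%:R * sa c2 - 1%:R * sb c0 + 1%:R * sb c2 + 1%:R * sc c0
  | 1, 2, 4, 0, 0 => 0 - (1%:R / 2%:R) * sa c0 + 1%:R * sa c1 + (1%:R / 2%:R) * sa c2 + (1%:R / 2%:R) * sb c0 - (1%:R / 2%:R) * sb c1 - (1%:R / 2%:R) * sc c0
  | 1, 2, 4, 0, 1 => (1%:R / 2%:R) * sa c0 + (1%:R / 2%:R) * sa c2 - (1%:R / 2%:R) * sb c0 + (1%:R / 2%:R) * sb c1 - (1%:R / 2%:R) * sc c0
  | 1, 2, 4, 1, 0 => 0 - (1%:R / 2%:R) * sa c0 + (1%:R / 2%:R) * sa c2 + (1%:R / 2%:R) * sb c0 + (1%:R / 2%:R) * sb c1 - (1%:R / 2%:R) * sc c0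
  | 1, 2, 4, 1, 1 => (1%:R / 2%:R) * sa c0 - (1%:R / 2%:R) * sa c2 - (1%:R / 2%:R) * sb c0 + (1%:R / 2%:R) * sb c1 + 1%:R * sb c2 - (1%:R / 2%:R) * sc c0
  | 1, 2, 5, 0, 0 => 1%:R * sa c1 - 1%:R * sc c0
  | 1, 2, 5, 0, 1 => 1%:R * sa c0 - 1%:R * sb c0 + 1%:R * sb c1 - 1%:R * sc c0
  | 1, 2, 5, 1, 0 => 1%:R * sb c1 - 1%:R * sc c0
  | 1, 2, 5, 1, 1 => 1%:R * sa c0 - 1%:R * sa c2 + 1%:R * sb c1 - 1%:R * sc c0 - 1%:R * sc c2
  | 1, 3, 4, 0, 0 => 1%:R * sa c1 + 1%:R * sa c2 - 1%:R * sb c0 - 1%:R * sb c2 - 1%:R * sc c0 + 1%:R * sc c2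
  | 1, 3, 4, 0, 1 => 1%:R * sb c0 + 1%:R * sb c2 - 1%:R * sc c2
  | 1, 3, 4, 1, 0 => 0 - 1%:R * sa c0 + 1%:R * sb c0
  | 1, 3, 4, 1, 1 => 0 - 1%:R * sa c2 + 1%:R * sb c0 + 2%:R * sb c2 - 1%:R * sc c2
  | 1, 3, 5, 0, 0 => 1%:R * sa c1 - 1%:R * sc c0
  | 1, 3, 5, 0, 1 => 1%:R * sb c0 - 1%:R * sb c2 - 1%:R * sc c2
  | 1, 3, 5, 1, 0 => 0 - 1%:R * sa c0 + 1%:R * sb c0
  | 1, 3, 5, 1, 1 => 0 - 1%:R * sa c2 + 1%:R * sb c0 - 1%:R * sc c2
  | 1, 4, 5, 0, 0 => 1%:R * sa c1 - 1%:R * sc c0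
  | 1, 4, 5, 0, 1 => 1%:R * sa c2 - 1%:R * sb c0 + 1%:R * sc c0
  | 1, 4, 5, 1, 0 => 0 - 1%:R * sa c0 + 1%:R * sa c2 - 1%:R * sb c0 + (1%:R / 2%:R) * sb c2 + 1%:R * sc c0 + (1%:R / 2%:R) * sc c2
  | 1, 4, 5, 1, 1 => 0 - 1%:R * sb c0 + (1%:R / 2%:R) * sb c2 + 1%:R * sc c0 - (1%:R / 2%:R) * sc c2
  | 2, 3, 4, 0, 0 => 0 - 1%:R * sa c1 + 1%:R * sb c0 + 2%:R * sb c1 - 1%:R * sc c1
  | 2, 3, 4, 0, 1 => 0 - 1%:R * sa c0 + 1%:R * sb c0
  | 2, 3, 4, 1, 0 => 1%:R * sb c0 + 1%:R * sb c1 - 1%:R * sc c1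
  | 2, 3, 4, 1, 1 => 1%:R * sa c1 + 1%:R * sa c2 - 1%:R * sb c0 - 1%:R * sb c1 - 1%:R * sc c0 + 1%:R * sc c1
  | 2, 3, 5, 0, 0 => 1%:R * sb c1 - 1%:R * sc c0
  | 2, 3, 5, 0, 1 => 0 - 1%:R * sa c0 + 1%:R * sb c0
  | 2, 3, 5, 1, 0 => 1%:R * sa c1 - 1%:R * sc c0
  | 2, 3, 5, 1, 1 => 0 - 1%:R * sa c1 + 2%:R * sb c0 - 1%:R * sb c1 + 1%:R * sc c0 - 1%:R * sc c1 - 1%:R * sc c2
  | 2, 4, 5, 0, 0 => 0 - (1%:R / 3%:R) * sa c0 + (1%:R / 3%:R) * sa c1 + (1%:R / 3%:R) * sb c0 + (2%:R / 3%:R) * sb c1 - (5%:R / 3%:R) * sc c0 - (1%:R / 3%:R) * sc c1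
  | 2, 4, 5, 0, 1 => 0 - (2%:R / 3%:R) * sa c0 + (2%:R / 3%:R) * sa c1 - (1%:R / 3%:R) * sb c0 + (1%:R / 3%:R) * sb c1 - (1%:R / 3%:R) * sc c0 + (1%:R / 3%:R) * sc c1
  | 2, 4, 5, 1, 0 => 1%:R * sa c1 - 1%:R * sc c0
  | 2, 4, 5, 1, 1 => 1%:R * sa c2 - 1%:R * sb c0 + 1%:R * sc c0
  | 3, 4, 5, 0, 0 => 1%:R * sa c1 - 1%:R * sc c0
  | 3, 4, 5, 0, 1 => 1%:R * sa c0 + 1%:R * sa c2 - 1%:R * sb c2
  | 3, 4, 5, 1, 0 => 1%:R * sa c0 + 1%:R * sa c1 - 1%:R * sb c1
  | 3, 4, 5, 1, 1 => 1%:R * sa c2 - 1%:R * sb c0 + 1%:R * sc c0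
  | _, _, _, _, _ => 0
  end.

Definition decC (a b c : nat) (sa sb sc : vec) : Msg :=
  [ffun rs => decCe a b c (nat_of_ord rs.1) (nat_of_ord rs.2) sa sb sc].

Lemma decC_ok a b c M k : (a < b)%N -> (b < c)%N -> (c < 6)%N ->
  decC a b c (shareN a M k) (shareN b M k) (shareN c M k) = M.
Proof.
move=> ab bc c6; apply/ffunP => -[r s]; rewrite ffunE /=.
have H2 := n2; have H3 := n3; have H4 := n4.
case: (I2_cases r) => ->; case: (I2_cases s) => ->;
do 6? [case: a ab => [|a] ab //];
do 6? [case: b ab bc => [|b] ab bc //];
do 6? [case: c bc c6 => [|c] bc c6 //];
rewrite /decCe /= ?sh0 ?sh1 ?sh2 ?shh // /gC /= ?x00 ?x10 ?x11 ?x12 ?x20 ?x21 ?x22.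
all: by field; rewrite ?H2 ?H3 ?H4.
Qed.
Definition dec3 (a b c : nat) (sa sb sc : vec) : Msg :=
  if (a < b)%N then
    (if (b < c)%N then decC a b c sa sb sc
     else if (a < c)%N then decC a c b sa sc sb else decC c a b sc sa sb)
  else
    (if (a < c)%N then decC b a c sb sa sc
     else if (b < c)%N then decC b c a sb sc sa else decC c b a sc sb sa).

Lemma dec3_ok a b c M k : a != b -> b != c -> a != c -> (a < 6)%N -> (b < 6)%N -> (c < 6)%N ->
  dec3 a b c (shareN a M k) (shareN b M k) (shareN c M k) = M.
Proof.
move=> /eqP ab /eqP bc /eqP ac a6 b6 c6; rewrite /dec3.
case: ltnP => h1; case: ltnP => h2; try case: ltnP => h3; apply: decC_ok; lia.
Qed.

Definition dvecC (j : nat) (M M' : Msg) : vec :=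
  let d a b := M (a, b) - M' (a, b) in
  if j == 3%N then [ffun c => if c == c0 then 0 else if c == c1 then d o0 o0 else d o1 o1]
  else if j == 4%N then
    (let e1 := d o0 o0 - d o1 o0 in let e2 := d o1 o1 - d o0 o1 in
     [ffun c => if c == c0 then (e1 + e2) / 2%:R else if c == c1 then (e1 - e2) / 2%:R
                else (e2 - e1) / 2%:R])
  else
    (let e1 := d o0 o1 - d o1 o0 - d o0 o0 in let e2 := - d o0 o1 - d o1 o1 in
     [ffun c => if c == c0 then (e1 + e2) / 2%:R else if c == c1 then 0 else (e1 - e2) / 2%:R]).

Lemma HA_C (j : nat) (M M' : Msg) : (3 <= j)%N -> (j < 6)%N ->
  exists tau : vec -> vec, injective tau /\
    forall k i, gC j i (xv i M' (tau k)) = gC j i (xv i M k).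
Proof.
move=> j3 j6; exists (fun k => k + dvecC j M M'); split; first exact: addIr.
have H2 := n2.
move=> k i; case: (I3_cases i) => ->;
do 6? [case: j j3 j6 => [|j] j3 j6 //];
rewrite /gC /dvecC /= ?x00 ?x10 ?x11 ?x12 ?x20 ?x21 ?x22 !ffun_addE !ffunE /=;
by field.
Qed.
End SchemeC.

Theorem schemeC p m (pr : prime p) (hm : (4 < m)%N) (hm6 : (m <= 6)%N) (hp : (m < p)%N) :
  ccn_secure_rate_achievable m 3 (Rdiv (INR (2 ^ 2)) (INR 3)).
Proof.
have p5 : (5 < p)%N by apply: leq_trans hp.
apply: (@generic p 2 m pr (@gC p)).
  move=> j hj M M'; apply: (HA_C pr p5) => //; apply: leq_trans (ltn_ord j) hm6.
move=> X cX.
have /card_gt0P [x Hx] : (0 < #|X|)%N by rewrite cX.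
have : #|X :\ x| == 2%N by move: (cardsD1 x X); rewrite Hx cX add1n => -[<-].
move=> /cards2P [y [z [yz Hyz]]].
have Hy : y \in X :\ x by rewrite Hyz !inE eqxx.
have Hz : z \in X :\ x by rewrite Hyz !inE eqxx orbT.
move: Hy Hz; rewrite !in_setD1 => /andP [yx Hy] /andP [zx Hz].
exists (fun s => dec3 x y z (s x) (s y) (s z)) => M k.
rewrite !ffunE Hx Hy Hz !shareN_share.
apply: (dec3_ok pr p5).
- by rewrite (inj_eq (@ord_inj m)) eq_sym.
- by rewrite (inj_eq (@ord_inj m)).
- by rewrite (inj_eq (@ord_inj m)) eq_sym.
all: exact: leq_trans (ltn_ord _) hm6.
Qed.

Close Scope ring_scope.

Unset Implicit Arguments.

Theorem lemma1 (m h : nat) :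
  (h = 2 /\ (3 <= m)%N) \/ ((2 <= h)%N /\ m = h.+1) \/
  (h = 3 /\ (m = 4 \/ m = 5 \/ m = 6)) ->
  ccn_secure_rate_achievable m h (Rdiv (INR ((h - 1) ^ 2)) (INR h)).
Proof.
have [p hp pr] := prime_above m.
case=> [[-> hm]|[[h2 Em]|[-> hm]]].
- exact: (schemeA pr hm hp).
- subst m; case: h h2 hp => [|[|[|n]]] // _ hp.
  + exact: (schemeA pr (isT : (2 < 3)%N) hp).
  + by rewrite subn1; apply: (@schemeB p n.+2 pr) => //; apply: ltn_trans hp.
- case: hm => [Em|hm].
    by subst m; apply: (@schemeB p 2 pr) => //; apply: ltn_trans hp.
  by case: hm => Em; subst m; apply: (schemeC pr).
Qed.
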